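(* Let $a\in[0,\infty)$ and let $\theta:[0,1]\to[0,\infty]$ and $\vartheta:[0,\infty]\to[0,1]$ be continuous and decreasing functions such that $O_{\theta,\vartheta}(x,y)=\vartheta(\theta(x)+\theta(y))$ defines an overlap function $O_{\theta,\vartheta}:[0,1]^2\to[0,1]$. Suppose $\theta(x)=\frac{a}{2}$ if and only if $x=1$. Then the following are equivalent: (1) $O_{\theta,\vartheta}$ is a t-norm; (2) $1$ is a neutral element of $O_{\theta,\vartheta}$; (3) $\vartheta(\theta(x)+\frac{a}{2})=x$ for all $x\in[0,1]$.
   Context: ''Decreasing'' means non-increasing and ''increasing'' means non-decreasing. Arithmetic in $[0,\infty]$ uses $c+\infty=\infty$; continuity on $[0,\infty]$ refers to the usual topology of the extended half-line. An overlap function is a map $O:[0,1]^2\to[0,1]$ that is (O1) commutative, (O2) $O(x,y)=0$ iff $xy=0$, (O3) $O(x,y)=1$ iff $xy=1$, (O4) increasing in each variable, (O5) continuous. A t-norm is a commutative, associative map $T:[0,1]^2\to[0,1]$, increasing in each variable, with $T(x,1)=x$ for all $x$. *)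

(* Defs.v *)
From HB Require Import structures.
From mathcomp Require Import all_boot all_order all_algebra.
From mathcomp Require Import all_classical all_reals all_analysis.
Set Implicit Arguments. Unset Strict Implicit. Unset Printing Implicit Defensive.
Import Order.TTheory GRing.Theory Num.Theory.
Import numFieldNormedType.Exports.
Local Open Scope classical_set_scope.
Local Open Scope ring_scope.

Section Defs.
Variable R : realType.

Definition unitI : set R := [set x | 0 <= x <= 1].
Definition extHL : set (\bar R) := [set x | (0 <= x)%E].

(* overlap function O : [0,1]^2 -> [0,1] (O given as total map, constrained on [0,1]^2) *)
Definition is_overlap (O : R -> R -> R) : Prop :=
  (forall x y, unitI x -> unitI y -> unitI (O x y)) /\
  (forall x y, unitI x -> unitI y -> O x y = O y x) /\
  (forall x y, unitI x -> unitI y -> (O x y = 0 <-> x * y = 0)) /\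
  (forall x y, unitI x -> unitI y -> (O x y = 1 <-> x * y = 1)) /\
  (forall x x' y, unitI x -> unitI x' -> unitI y -> x <= x' -> O x y <= O x' y) /\
  (forall x y y', unitI x -> unitI y -> unitI y' -> y <= y' -> O x y <= O x y') /\
  {within [set p : R * R | unitI p.1 /\ unitI p.2], continuous (fun p => O p.1 p.2)}.

Definition is_tnorm (T : R -> R -> R) : Prop :=
  (forall x y, unitI x -> unitI y -> unitI (T x y)) /\
  (forall x y, unitI x -> unitI y -> T x y = T y x) /\
  (forall x y z, unitI x -> unitI y -> unitI z -> T x (T y z) = T (T x y) z) /\
  (forall x x' y, unitI x -> unitI x' -> unitI y -> x <= x' -> T x y <= T x' y) /\
  (forall x y y', unitI x -> unitI y -> unitI y' -> y <= y' -> T x y <= T x y') /\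
  (forall x, unitI x -> T x 1 = x).

Definition is_neutral (O : R -> R -> R) (e : R) : Prop :=
  forall x, unitI x -> O x e = x /\ O e x = x.

Definition Otv (theta : R -> \bar R) (vartheta : \bar R -> R) (x y : R) : R :=
  vartheta (theta x + theta y)%E.

End Defs.
Arguments unitI R : clear implicits.
Arguments extHL R : clear implicits.

(* Main.v *)
Require Import Defs.
From HB Require Import structures.
From mathcomp Require Import all_boot all_order all_algebra.
From mathcomp Require Import all_classical all_reals all_analysis.
Import Order.TTheory GRing.Theory Num.Theory.
Import numFieldNormedType.Exports.
Local Open Scope classical_set_scope.
Local Open Scope ring_scope.

Lemma contract_continuous (R : realType) : continuous (@contract R).
Proof.
move=> x; apply/cvgrPdist_lt => e e0.
have := @nbhsx_ballx _ _ x e e0.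
apply: filterS => y.
rewrite /ball /=. done.
Qed.

Lemma unitI_itv (R : realType) : unitI R = `[(0:R), 1]%classic.
Proof.
by apply/seteqP; split => x; rewrite /unitI /= in_itv.
Qed.

Lemma surj_theta (R : realType) (theta : R -> \bar R) (h s : \bar R) :
  {within unitI R, continuous theta} ->
  theta 1 = h -> (0 <= h)%E ->
  (h <= s <= theta 0%R)%E -> exists x, unitI R x /\ theta x = s.
Proof.
move=> thc th1 h0 /andP[hs s0].
have [->|sne] := eqVneq s (theta 0%R).
  by exists 0; split => //; rewrite /unitI /= lexx ler01.
rewrite unitI_itv in thc.
have := IVT (f := fun x => contract (theta x)) (v := contract s) ler01.
case.
- move=> x.
  apply: (continuous_comp (thc x)).
  exact: contract_continuous.
- rewrite ge_min le_max !le_contract th1 hs s0 /=.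
  by rewrite orbT.
move=> c; rewrite in_itv /= => cI /contract_inj <-.
by exists c.
Qed.

Lemma acE (R : realType) (p q r h : \bar R) : h \is a fin_num ->
  (p + (q + (r - h)) = r + (p + (q - h)))%E.
Proof.
move=> hf.
move: (q - h)%E (subeK q hf) => Q <-.
move: (r - h)%E (subeK r hf) => S <-.
rewrite (addeC Q h) -addeA !addeA (addeC S h) -(addeA h S p) (addeC S p) !addeA.
rewrite -(addeA (h + p)) (addeC S Q) !addeA (addeC p h).
done.
Qed.

Theorem theorem4p1 (R : realType) (a : R) (theta : R -> \bar R) (vartheta : \bar R -> R) :
  0 <= a ->
  (* theta : [0,1] -> [0,oo], continuous and decreasing *)
  (forall x, unitI R x -> extHL R (theta x)) ->
  {within unitI R, continuous theta} ->
  (forall x y, unitI R x -> unitI R y -> x <= y -> (theta y <= theta x)%E) ->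
  (* vartheta : [0,oo] -> [0,1], continuous and decreasing *)
  (forall u, extHL R u -> unitI R (vartheta u)) ->
  {within extHL R, continuous vartheta} ->
  (forall u v, extHL R u -> extHL R v -> (u <= v)%E -> vartheta v <= vartheta u) ->
  is_overlap (Otv theta vartheta) ->
  (forall x, unitI R x -> (theta x = (a / 2)%:E <-> x = 1)) ->
  (is_tnorm (Otv theta vartheta) <-> is_neutral (Otv theta vartheta) 1) /\
  (is_neutral (Otv theta vartheta) 1 <->
     forall x, unitI R x -> vartheta (theta x + (a / 2)%:E)%E = x).
Proof.
move=> a0 thI thc thd vI vc vd Ov thiff.
set h := ((a / 2)%:E : \bar R).
have hfin : h \is a fin_num by [].
have h0 : (0 <= h)%E by rewrite lee_fin divr_ge0.
have I0 : unitI R 0 by rewrite /unitI /= lexx ler01.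
have I1 : unitI R 1 by rewrite /unitI /= lexx ler01.
have th1 : theta 1 = h by apply/thiff.
have thge x : unitI R x -> (h <= theta x)%E.
  by move=> xI; rewrite -th1; apply: thd => //; case/andP: xI.
have thle x : unitI R x -> (theta x <= theta 0%R)%E.
  by move=> xI; apply: thd => //; case/andP: xI.
have sym x y : Otv theta vartheta x y = Otv theta vartheta y x by rewrite /Otv addeC.
have n23 : is_neutral (Otv theta vartheta) 1 <->
    forall x, unitI R x -> vartheta (theta x + h)%E = x.
  split => H x xI.
    by have [] := H x xI; rewrite /Otv th1.
  by split; rewrite /Otv th1 ?H // addeC H.
split; last exact: n23.
split.
  case=> _ [_ [_ [_ [_ T1]]]] x xI; split; first exact: T1.
  by rewrite sym T1.
move=> /n23 H3.
case: Ov => OI [Oc [_ [_ [Om1 [Om2 _]]]]].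
have Z u : (theta 0%R + h <= u)%E -> vartheta u = 0.
  move=> hu.
  have e0 : extHL R (theta 0%R + h)%E by rewrite /extHL /= adde_ge0 // thI.
  have eu : extHL R u by apply: le_trans hu.
  apply/le_anti; apply/andP; split; last by case/andP: (vI u eu).
  by apply: (le_trans (vd _ _ e0 eu hu)); rewrite H3.
have L x s : unitI R x -> (h <= s)%E ->
    vartheta (theta x + theta (vartheta (s + h)))%E = vartheta (theta x + s)%E.
  move=> xI hs.
  case: (leP s (theta 0%R)) => s0.
    have [y [yI <-]] := @surj_theta R theta h s thc th1 h0 (introT andP (conj hs s0)).
    by rewrite H3.
  have -> : vartheta (s + h)%E = 0 by apply: Z; apply: leeD (ltW s0) (lexx h).
  rewrite !Z //; rewrite addeC; apply: leeD; rewrite ?thge //.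
  exact: ltW.
split; first exact: OI.
split; first exact: Oc.
split; last first.
  split; first exact: Om1.
  split; first exact: Om2.
  by move=> x xI; rewrite /Otv th1 H3.
move=> x y z xI yI zI; rewrite /Otv.
have sh w : unitI R w -> (0 <= theta w - h)%E by move=> wI; rewrite sube_ge0 ?hfin ?thge.
have e1 : (theta y + theta z = (theta y + (theta z - h)) + h)%E by rewrite -addeA subeK.
have e2 : (theta x + theta y = (theta x + (theta y - h)) + h)%E by rewrite -addeA subeK.
rewrite e1 L //; last by rewrite -[X in (X <= _)%E]adde0 leeD ?thge ?sh.
rewrite [(theta (vartheta _) + theta z)%E]addeC e2 L //; last first.
  by rewrite -[X in (X <= _)%E]adde0 leeD ?thge ?sh.
by rewrite acE.
Qed.
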